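(* Fix $a>0$. Let $f\in C^\infty(\mathbb{T})$ be even and nonnegative with $f(0)=0$ and $f'\ge 0$ on $[0,\pi)$. Then for all $0<x\le \pi/2$, \[ H_a f(x) \le \int_0^{2x} f'(y)\,G_a(x,y)\,dy, \] where \[ G_a(x,y) := \frac{1}{2\pi}\log\left(\frac{1+\frac{a^2}{x^2}}{1+\frac{a^2}{(x-y)^2}}\cdot\frac{1+\frac{a^2}{(2\pi-x)^2}}{1+\frac{a^2}{(x-y+2\pi\,\mathrm{sgn}(y-x))^2}}\right). \]
   Context: $\mathbb{T}=[-\pi,\pi)$ is the circle; functions on $\mathbb{T}$ are identified with $2\pi$-periodic functions on $\mathbb{R}$, and $C^\infty(\mathbb{T})$ denotes smooth $2\pi$-periodic functions with all derivatives bounded. For $a>0$, $H_a f(x) := \mathrm{P.V.}\int_{\mathbb{R}} f(x-y)K_a(y)\,dy$ with $K_a(y) := \frac{a^2}{\pi y(y^2+a^2)}$, applied to the periodic extension of $f$. *)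

(* Defs.v *)
From Stdlib Require Import Reals.
From Coquelicot Require Import Coquelicot.
Open Scope R_scope.

(* f in C^oo(T): 2pi-periodic function on R, smooth, all derivatives bounded *)
Definition smooth_periodic (f : R -> R) : Prop :=
  (forall x, f (x + 2 * PI) = f x) /\
  (forall n x, ex_derive_n f n x) /\
  (forall n, exists M, forall x, Rabs (Derive_n f n x) <= M).

Definition Ka (a y : R) : R := a ^ 2 / (PI * y * (y ^ 2 + a ^ 2)).

(* L is the principal value  P.V. int_R f(x-y) K_a(y) dy :
   for every eps > 0 the integral over {|y| >= eps} exists (as improper
   integrals on (-oo,-eps] and [eps,+oo)), and these tend to L as eps -> 0+. *)
Definition is_Ha (a : R) (f : R -> R) (x L : R) : Prop :=
  exists Ineg Ipos : R -> R,
    (forall eps, 0 < eps ->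
       is_RInt_gen (fun y => f (x - y) * Ka a y)
         (Rbar_locally m_infty) (at_point (- eps)) (Ineg eps) /\
       is_RInt_gen (fun y => f (x - y) * Ka a y)
         (at_point eps) (Rbar_locally p_infty) (Ipos eps)) /\
    filterlim (fun eps => Ineg eps + Ipos eps) (at_right 0) (locally L).

Definition sgn (t : R) : R := if Rlt_dec 0 t then 1 else if Rlt_dec t 0 then -1 else 0.

Definition Ga (a x y : R) : R :=
  / (2 * PI) *
  ln ((1 + a ^ 2 / x ^ 2) / (1 + a ^ 2 / (x - y) ^ 2) *
      ((1 + a ^ 2 / (2 * PI - x) ^ 2) /
       (1 + a ^ 2 / (x - y + 2 * PI * sgn (y - x)) ^ 2))).

(* Main.v *)
Require Import Defs.
From Stdlib Require Import Reals Lra Psatz.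
From Coquelicot Require Import Coquelicot.
Open Scope R_scope.


Definition Pk (a w : R) : R := - / (2 * PI) * ln (1 + a ^ 2 / w ^ 2).

Lemma PI2_pos : 0 < 2 * PI.
Proof. generalize PI_RGT_0; lra. Qed.

Lemma div_sq_ge0 (a w : R) : 0 <= a ^ 2 / w ^ 2.
Proof.
  destruct (Req_dec w 0) as [->|Hw].
  - replace (0 ^ 2) with 0 by ring. unfold Rdiv; rewrite Rinv_0. lra.
  - apply Rmult_le_pos. apply pow2_ge_0. apply Rlt_le, Rinv_0_lt_compat.
    apply pow2_gt_0; auto.
Qed.

Lemma Pk_even a w : Pk a (- w) = Pk a w.
Proof. unfold Pk. f_equal. f_equal. f_equal. f_equal. ring. Qed.

Lemma Pk_le0 a w : Pk a w <= 0.
Proof.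
  unfold Pk. assert (H := div_sq_ge0 a w).
  assert (0 <= ln (1 + a ^ 2 / w ^ 2)).
  { rewrite <- ln_1. apply ln_le; lra. }
  assert (0 < / (2 * PI)) by (apply Rinv_0_lt_compat, PI2_pos).
  nra.
Qed.

Lemma Pk_derive a w : 0 < a -> w <> 0 -> is_derive (Pk a) w (Ka a w).
Proof.
  intros Ha Hw. unfold Pk, Ka.
  assert (0 < PI) by apply PI_RGT_0.
  assert (0 < w^2) by (apply pow2_gt_0; auto).
  assert (0 < a^2) by (apply pow2_gt_0; lra).
  assert (0 <= a ^ 2 / w ^ 2) by apply div_sq_ge0.
  auto_derive.
  - repeat split; simpl in *; unfold Rdiv in *; nra.
  - simpl in *. field. repeat split; nra.
Qed.

Lemma Pk_incr a u v : 0 < u <= v -> Pk a u <= Pk a v.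
Proof.
  intros [Hu Huv]. unfold Pk.
  assert (0 < PI) by apply PI_RGT_0.
  assert (0 < / (2 * PI)) by (apply Rinv_0_lt_compat; lra).
  assert (a^2/v^2 <= a^2/u^2).
  { unfold Rdiv. apply Rmult_le_compat_l. apply pow2_ge_0.
    apply Rinv_le_contravar. apply pow2_gt_0; lra.
    apply pow_incr; lra. }
  assert (0 <= a ^ 2 / v ^ 2) by apply div_sq_ge0.
  assert (ln (1 + a^2/v^2) <= ln (1 + a^2/u^2)) by (apply ln_le; lra).
  nra.
Qed.

Lemma Ka_decr a u v : 0 < u <= v -> Ka a v <= Ka a u.
Proof.
  intros [Hu Huv]. unfold Ka.
  assert (0 < PI) by apply PI_RGT_0.
  unfold Rdiv. apply Rmult_le_compat_l. apply pow2_ge_0.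
  apply Rinv_le_contravar.
  - assert (0 < u^2 + a^2) by (generalize (pow2_ge_0 a) (pow2_gt_0 u); intros; nra).
    apply Rmult_lt_0_compat; auto. apply Rmult_lt_0_compat; lra.
  - assert (u^2 <= v^2) by (apply pow_incr; lra).
    assert (0 <= u^2 + a^2) by (generalize (pow2_ge_0 a) (pow2_ge_0 u); intros; nra).
    apply Rmult_le_compat; try nra; try (apply Rmult_le_compat; lra).
Qed.

Lemma Pk_concave a al be h : 0 < a -> 0 < al <= be -> 0 <= h ->
  Pk a (be + h) - Pk a be <= Pk a (al + h) - Pk a al.
Proof.
  intros Ha Hab Hh.
  set (g := fun t => Pk a (t + h) - Pk a t).
  assert (Hd : forall t, 0 < t -> is_derive g t (Ka a (t + h) - Ka a t)).
  { intros t Ht. unfold g. apply (is_derive_minus (fun t => Pk a (t + h)) (Pk a)).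
    - replace (Ka a (t + h)) with (1 * Ka a (t + h)) by ring.
      apply (is_derive_comp (Pk a) (fun t => t + h)).
      apply Pk_derive; lra.
      auto_derive; auto; ring.
    - apply Pk_derive; lra. }
  destruct (MVT_gen g al be (fun t => Ka a (t + h) - Ka a t)) as [c [Hc Heq]].
  - intros t Ht. apply Hd. rewrite Rmin_left in Ht by lra. lra.
  - intros t Ht. rewrite Rmin_left in Ht by lra. apply continuity_pt_filterlim.
    apply (ex_derive_continuous g). eexists. apply Hd. lra.
  - rewrite Rmin_left in Hc by lra. rewrite Rmax_right in Hc by lra.
    assert (Ka a (c + h) <= Ka a c) by (apply Ka_decr; lra).
    unfold g in Heq. nra.
Qed.


Lemma ln1p_le u : 0 <= u -> ln (1 + u) <= u.
Proof.
  intros Hu. rewrite <- (ln_exp u) at 2. apply ln_le. lra. apply exp_ineq1_le.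
Qed.

Lemma Pk_bound a w : 0 < w -> - Pk a w <= a ^ 2 / (2 * PI * w ^ 2).
Proof.
  intros Hw. unfold Pk.
  assert (0 < PI) by apply PI_RGT_0.
  assert (0 <= a ^ 2 / w ^ 2) by apply div_sq_ge0.
  assert (ln (1 + a^2/w^2) <= a^2/w^2) by (apply ln1p_le; auto).
  replace (a ^ 2 / (2 * PI * w ^ 2)) with (/ (2 * PI) * (a^2/w^2)) by (field; lra).
  assert (0 < / (2 * PI)) by (apply Rinv_0_lt_compat; lra).
  nra.
Qed.

Lemma Pk_sqrt_bound a w : 0 < a -> 0 < w -> - Pk a w <= 2 / PI * (sqrt a / sqrt w).
Proof.
  intros Ha Hw. unfold Pk.
  assert (0 < PI) by apply PI_RGT_0.
  set (r := sqrt (a / w)).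
  assert (Hr0 : 0 <= r) by apply sqrt_pos.
  assert (Hr2 : r * r = a / w) by (apply sqrt_sqrt; apply Rlt_le, Rdiv_lt_0_compat; lra).
  assert (Hv : a ^ 2 / w ^ 2 = (r * r) * (r * r)) by (rewrite Hr2; field; lra).
  assert (H1 : ln (1 + a ^ 2 / w ^ 2) <= 4 * r).
  { rewrite Hv. apply Rle_trans with (ln ((1 + r) ^ 4)).
    - apply ln_le. nra. nra.
    - rewrite ln_pow by lra. simpl INR. 
      assert (ln (1 + r) <= r) by (apply ln1p_le; auto). lra. }
  assert (Hr : r = sqrt a / sqrt w) by (unfold r; apply sqrt_div_alt; lra).
  rewrite <- Hr.
  assert (0 < / (2 * PI)) by (apply Rinv_0_lt_compat; lra).
  replace (2 / PI * r) with (/ (2 * PI) * (4 * r)) by (field; lra).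
  nra.
Qed.


Section Kernel.
Variables (a x : R).
Hypothesis Ha : 0 < a.
Hypothesis Hx : 0 < x <= PI / 2.

Definition Dd z := Pk a (x - z) - Pk a (x + z).
Definition bk (k : nat) s := Dd (2 * PI * INR k + s) - Dd (2 * PI * INR k + 2 * PI - s).
Fixpoint Ws (N : nat) s := match N with O => bk 0 s | S n => Ws n s + bk (S n) s end.
Definition qk (k : nat) u := Pk a (2 * PI * INR k + u) + Pk a (2 * PI * (INR k + 1) - u).
Definition Gq s := qk 0 (Rabs (s - x)) - qk 0 x.

Lemma KL k u v : 0 < 2 * PI * INR k + u -> u <= v -> u + v <= 2 * PI -> qk k u <= qk k v.
Proof.
  intros H1 H2 H3. unfold qk.
  assert (H := Pk_concave a (2 * PI * INR k + u) (2 * PI * (INR k + 1) - v) (v - u) Ha).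
  replace (2 * PI * (INR k + 1) - v + (v - u)) with (2 * PI * (INR k + 1) - u) in H by ring.
  replace (2 * PI * INR k + u + (v - u)) with (2 * PI * INR k + v) in H by ring.
  assert (Pk a (2 * PI * (INR k + 1) - u) - Pk a (2 * PI * (INR k + 1) - v) <=
          Pk a (2 * PI * INR k + v) - Pk a (2 * PI * INR k + u)) by (apply H; lra).
  lra.
Qed.

Lemma b_q k s : bk k s = qk k (s - x) - qk k (s + x).
Proof.
  unfold bk, Dd, qk.
  rewrite <- (Pk_even a (x - (2 * PI * INR k + s))).
  rewrite <- (Pk_even a (x - (2 * PI * INR k + 2 * PI - s))).
  replace (- (x - (2 * PI * INR k + s))) with (2 * PI * INR k + (s - x)) by ring.
  replace (x + (2 * PI * INR k + s)) with (2 * PI * INR k + (s + x)) by ring.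
  replace (- (x - (2 * PI * INR k + 2 * PI - s))) with (2 * PI * (INR k + 1) - (s + x)) by ring.
  replace (x + (2 * PI * INR k + 2 * PI - s)) with (2 * PI * (INR k + 1) - (s - x)) by ring.
  ring.
Qed.

Lemma PI_pos : 0 < PI.
Proof. apply PI_RGT_0. Qed.

Lemma INR_ge0 k : 0 <= INR k.
Proof. apply pos_INR. Qed.

Lemma bk_nonpos k s : 0 <= s <= PI -> (x < s \/ (1 <= k)%nat) -> bk k s <= 0.
Proof.
  intros Hs Hk. rewrite b_q.
  assert (HPI := PI_pos). assert (Hk0 := INR_ge0 k).
  assert (0 < 2 * PI * INR k + (s - x)).
  { destruct Hk as [Hk|Hk]. nra. apply le_INR in Hk. simpl in Hk. nra. }
  assert (qk k (s - x) <= qk k (s + x)) by (apply KL; lra).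
  lra.
Qed.

Lemma W_le_0 N s : x < s <= PI -> Ws N s <= 0.
Proof.
  intros Hs. induction N as [|n IH]; simpl.
  - apply bk_nonpos; lra.
  - assert (bk (S n) s <= 0) by (apply bk_nonpos; lra). lra.
Qed.

Lemma W_le_b0 N s : 0 <= s <= PI -> Ws N s <= bk 0 s.
Proof.
  intros Hs. induction N as [|n IH]; simpl.
  - lra.
  - assert (bk (S n) s <= 0) by (apply bk_nonpos; [lra| right; lia]). lra.
Qed.

Lemma W_hole N s : 0 <= s <= 2 * x -> Ws N s - Pk a (x - s) <= - Pk a x - Pk a (PI / 2).
Proof.
  intros Hs. assert (HPI := PI_pos).
  assert (H := W_le_b0 N s ltac:(lra)).
  unfold bk, Dd in H. simpl INR in H.
  replace (2 * PI * 0 + s) with s in H by ring.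
  replace (x - (2 * PI * 0 + 2 * PI - s)) with (- (2 * PI - s - x)) in H by ring.
  rewrite Pk_even in H.
  assert (Pk a x <= Pk a (x + s)) by (apply Pk_incr; lra).
  assert (Pk a (PI / 2) <= Pk a (2 * PI - s - x)) by (apply Pk_incr; lra).
  assert (Pk a (x + (2 * PI * 0 + 2 * PI - s)) <= 0) by apply Pk_le0.
  lra.
Qed.

Definition cN (m : nat) t := Pk a (2 * PI * INR m + t) - Pk a (2 * PI * INR m - t).

Lemma q_shift m t : qk m (- t) - qk m t = cN (S m) t - cN m t.
Proof.
  unfold qk, cN. rewrite S_INR.
  replace (2 * PI * INR m + - t) with (2 * PI * INR m - t) by ring.
  replace (2 * PI * (INR m + 1) - - t) with (2 * PI * (INR m + 1) + t) by ring.
  ring.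
Qed.

Lemma W_left N s : 0 <= s < x -> Ws N s <= Gq s + cN (S N) (x - s).
Proof.
  intros Hs. assert (HPI := PI_pos).
  set (t := x - s).
  assert (Hst : s - x = - t) by (unfold t; ring).
  assert (Habs : Rabs (s - x) = t) by (rewrite Hst, Rabs_Ropp; apply Rabs_right; unfold t; lra).
  induction N as [|n IH]; simpl Ws.
  - rewrite b_q, Hst. unfold Gq. rewrite Habs.
    assert (E := q_shift 0 t).
    assert (E0 : cN 0 t = 0).
    { unfold cN. simpl INR. replace (2 * PI * 0 - t) with (- (2 * PI * 0 + t)) by ring.
      rewrite Pk_even. ring. }
    assert (qk 0 x <= qk 0 (s + x)) by (apply KL; simpl INR; unfold t in *; lra).
    lra.
  - rewrite b_q, Hst.
    assert (E := q_shift (S n) t).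
    assert (qk (S n) t <= qk (S n) (s + x)).
    { apply KL. assert (Hk := INR_ge0 n). rewrite S_INR. unfold t; nra. unfold t; lra. unfold t; lra. }
    lra.
Qed.

Lemma cN_bound N t : 0 <= t <= PI -> cN (S N) t <= - Pk a (2 * PI * INR N + PI).
Proof.
  intros Ht. assert (HPI := PI_pos). assert (Hk := INR_ge0 N).
  unfold cN. rewrite S_INR.
  assert (Pk a (2 * PI * (INR N + 1) + t) <= 0) by apply Pk_le0.
  assert (Pk a (2 * PI * INR N + PI) <= Pk a (2 * PI * (INR N + 1) - t)) by (apply Pk_incr; split; nra).
  lra.
Qed.

Lemma W_le_G N s : 0 <= s <= 2 * x -> s <> x -> Ws N s <= Gq s - Pk a (2 * PI * INR N + PI).
Proof.
  intros Hs Hsx. assert (HPI := PI_pos).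
  assert (Hp : 0 <= - Pk a (2 * PI * INR N + PI)) by (generalize (Pk_le0 a (2 * PI * INR N + PI)); lra).
  destruct (Rlt_le_dec s x) as [Hlt|Hge].
  - assert (H1 := W_left N s ltac:(lra)).
    assert (H2 := cN_bound N (x - s) ltac:(lra)). lra.
  - assert (Hgt : x < s) by lra.
    assert (Habs : Rabs (s - x) = s - x) by (apply Rabs_right; lra).
    assert (Ws N s <= Gq s).
    { induction N as [|n IH]; simpl Ws.
      - rewrite b_q. unfold Gq. rewrite Habs.
        assert (qk 0 x <= qk 0 (s + x)) by (apply KL; simpl INR; lra). lra.
      - assert (bk (S n) s <= 0) by (apply bk_nonpos; lra).
        assert (Hp' : 0 <= - Pk a (2 * PI * INR n + PI)) by (generalize (Pk_le0 a (2 * PI * INR n + PI)); lra).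
        specialize (IH Hp'). lra. }
    lra.
Qed.

End Kernel.


Lemma ln4 A B C D : 0 < A -> 0 < B -> 0 < C -> 0 < D ->
  ln (A / B * (C / D)) = ln A - ln B + ln C - ln D.
Proof.
  intros. unfold Rdiv.
  assert (0 < / B) by (apply Rinv_0_lt_compat; auto).
  assert (0 < / D) by (apply Rinv_0_lt_compat; auto).
  rewrite ln_mult, ln_mult, ln_mult, ln_Rinv, ln_Rinv; auto; try ring;
  apply Rmult_lt_0_compat; auto.
Qed.

Lemma one_plus_pos a w : 0 < 1 + a ^ 2 / w ^ 2.
Proof. generalize (div_sq_ge0 a w). lra. Qed.

Lemma Gq_Ga a x y : 0 < x -> y <> x -> Gq a x y = Ga a x y.
Proof.
  intros Hx Hy. unfold Gq, qk, Ga. simpl INR.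
  rewrite ln4 by apply one_plus_pos.
  assert (E : forall w, ln (1 + a ^ 2 / w ^ 2) = - (2 * PI) * Pk a w).
  { intros w. unfold Pk. assert (0 < PI) by apply PI_RGT_0. field. lra. }
  rewrite !E.
  assert (0 < PI) by apply PI_RGT_0.
  unfold sgn. destruct (Rlt_dec 0 (y - x)) as [H1|H1].
  - rewrite Rabs_right by lra.
    replace (2 * PI * 0 + (y - x)) with (- (x - y)) by ring. rewrite Pk_even.
    replace (2 * PI * (0 + 1) - (y - x)) with (x - y + 2 * PI * 1) by ring.
    replace (2 * PI * 0 + x) with x by ring.
    replace (2 * PI * (0 + 1) - x) with (2 * PI - x) by ring.
    field. lra.
  - destruct (Rlt_dec (y - x) 0) as [H2|H2]; [|exfalso; apply Hy; apply Rnot_lt_le in H1; apply Rnot_lt_le in H2; lra].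
    rewrite Rabs_left by lra.
    replace (2 * PI * 0 + - (y - x)) with (x - y) by ring.
    replace (2 * PI * (0 + 1) - - (y - x)) with (- (x - y + 2 * PI * -1)) by ring. rewrite Pk_even.
    replace (2 * PI * 0 + x) with x by ring.
    replace (2 * PI * (0 + 1) - x) with (2 * PI - x) by ring.
    field. lra.
Qed.

Lemma Gq_bound_left a x y : 0 < a -> 0 < x <= PI / 2 -> 0 <= y < x ->
  Rabs (Gq a x y) <= (- Pk a x - 2 * Pk a (2 * PI - x)) + 2 / PI * sqrt a / sqrt (x - y).
Proof.
  intros Ha Hx Hy. assert (0 < PI) by apply PI_RGT_0.
  unfold Gq, qk. simpl INR. rewrite (Rabs_left (y - x)) by lra.
  replace (2 * PI * 0 + - (y - x)) with (x - y) by ring.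
  replace (2 * PI * (0 + 1) - - (y - x)) with (2 * PI - (x - y)) by ring.
  replace (2 * PI * 0 + x) with x by ring.
  replace (2 * PI * (0 + 1) - x) with (2 * PI - x) by ring.
  assert (H1 := Pk_le0 a (x - y)). assert (H2 := Pk_le0 a (2 * PI - (x - y))).
  assert (H3 := Pk_le0 a x). assert (H4 := Pk_le0 a (2 * PI - x)).
  assert (H5 : Pk a (2 * PI - x) <= Pk a (2 * PI - (x - y))) by (apply Pk_incr; lra).
  assert (H6 := Pk_sqrt_bound a (x - y) Ha ltac:(lra)).
  replace (2 / PI * sqrt a / sqrt (x - y)) with (2 / PI * (sqrt a / sqrt (x - y))) by (unfold Rdiv; ring).
  apply Rabs_le. lra.
Qed.

Lemma Gq_bound_right a x y : 0 < a -> 0 < x <= PI / 2 -> x < y <= 2 * x ->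
  Rabs (Gq a x y) <= (- Pk a x - 2 * Pk a (2 * PI - x)) + 2 / PI * sqrt a / sqrt (y - x).
Proof.
  intros Ha Hx Hy. assert (0 < PI) by apply PI_RGT_0.
  unfold Gq, qk. simpl INR. rewrite (Rabs_right (y - x)) by lra.
  replace (2 * PI * 0 + (y - x)) with (y - x) by ring.
  replace (2 * PI * (0 + 1) - (y - x)) with (2 * PI - (y - x)) by ring.
  replace (2 * PI * 0 + x) with x by ring.
  replace (2 * PI * (0 + 1) - x) with (2 * PI - x) by ring.
  assert (H1 := Pk_le0 a (y - x)). assert (H2 := Pk_le0 a (2 * PI - (y - x))).
  assert (H3 := Pk_le0 a x). assert (H4 := Pk_le0 a (2 * PI - x)).
  assert (H5 : Pk a (2 * PI - x) <= Pk a (2 * PI - (y - x))) by (apply Pk_incr; lra).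
  assert (H6 := Pk_sqrt_bound a (y - x) Ha ltac:(lra)).
  replace (2 / PI * sqrt a / sqrt (y - x)) with (2 / PI * (sqrt a / sqrt (y - x))) by (unfold Rdiv; ring).
  apply Rabs_le. lra.
Qed.


Lemma cont_mul (f g : R -> R) x : continuous f x -> continuous g x -> continuous (fun y => f y * g y) x.
Proof. apply (continuous_mult f g). Qed.
Lemma cont_add (f g : R -> R) x : continuous f x -> continuous g x -> continuous (fun y => f y + g y) x.
Proof. apply (continuous_plus f g). Qed.
Lemma cont_sub (f g : R -> R) x : continuous f x -> continuous g x -> continuous (fun y => f y - g y) x.
Proof. apply (continuous_minus f g). Qed.
Lemma cont_opp (f : R -> R) x : continuous f x -> continuous (fun y => - f y) x.
Proof. apply (continuous_opp f). Qed.
Lemma cont_comp (f g : R -> R) x : continuous f x -> continuous g (f x) -> continuous (fun y => g (f y)) x.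
Proof. apply (continuous_comp f g). Qed.
Lemma cont_lin (g : R -> R) (u v x : R) : continuous g (u * x + v) -> continuous (fun y => g (u * y + v)) x.
Proof.
  intros H. apply (cont_comp (fun y => u * y + v) g). 2: exact H.
  apply cont_add. apply cont_mul. apply continuous_const. apply continuous_id. apply continuous_const.
Qed.

Lemma ball_R (u v e : R) : ball u e v <-> Rabs (v - u) < e.
Proof. unfold ball; simpl; unfold AbsRing_ball; simpl. unfold abs, minus, plus, opp; simpl. tauto. Qed.

Lemma RInt_gen_point_l (g : R -> R) (a : R) (Fb : (R -> Prop) -> Prop) {FF : Filter Fb} (I : R) :
  Fb (fun b => ex_RInt g a b) -> filterlim (fun b => RInt g a b) Fb (locally I) ->
  is_RInt_gen g (at_point a) Fb I.
Proof.
  intros Hex Hlim P HP. unfold filtermapi.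
  apply Filter_prod with (Q := fun t => t = a) (R := fun b => ex_RInt g a b /\ P (RInt g a b)).
  - reflexivity.
  - apply filter_and. exact Hex. apply Hlim. exact HP.
  - intros u v -> [H1 H2]. exists (RInt g a v). split; simpl; auto. exact (RInt_correct g _ _ H1).
Qed.

Lemma RInt_gen_point_r (g : R -> R) (b : R) (Fa : (R -> Prop) -> Prop) {FF : Filter Fa} (I : R) :
  Fa (fun a => ex_RInt g a b) -> filterlim (fun a => RInt g a b) Fa (locally I) ->
  is_RInt_gen g Fa (at_point b) I.
Proof.
  intros Hex Hlim P HP. unfold filtermapi.
  apply Filter_prod with (R := fun t => t = b) (Q := fun a => ex_RInt g a b /\ P (RInt g a b)).
  - apply filter_and. exact Hex. apply Hlim. exact HP.
  - reflexivity.
  - intros u v [H1 H2] ->. exists (RInt g u b). split; simpl; auto. exact (RInt_correct g _ _ H1).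
Qed.

Lemma cauchy_lim {T} {F : (T -> Prop) -> Prop} {FF : ProperFilter F} (Psi Phi : T -> R) (l : R) (D : T -> Prop) :
  F D -> (forall u v, D u -> D v -> Rabs (Psi v - Psi u) <= Rabs (Phi v - Phi u)) ->
  filterlim Phi F (locally l) -> exists I, filterlim Psi F (locally I).
Proof.
  intros HD Hb Hl.
  apply (filterlim_locally_cauchy (U := R_CompleteSpace)).
  intros eps.
  assert (He : 0 < eps / 2) by (destruct eps; simpl; lra).
  exists (fun t => D t /\ Rabs (Phi t - l) < eps / 2). split.
  - apply filter_and; auto. 
    assert (Hl' := Hl (fun y => Rabs (y - l) < eps / 2)). apply Hl'.
    exists (mkposreal _ He). intros y Hy. apply ball_R in Hy. simpl in Hy. exact Hy.
  - intros u v [Du Hu] [Dv Hv]. apply ball_R.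
    eapply Rle_lt_trans. apply Hb; auto.
    replace (Phi v - Phi u) with ((Phi v - l) - (Phi u - l)) by ring.
    eapply Rle_lt_trans. apply Rabs_triang. rewrite Rabs_Ropp. destruct eps; simpl in *; lra.
Qed.

Lemma Chasles (h : R -> R) a b c : ex_RInt h a b -> ex_RInt h b c -> RInt h a b + RInt h b c = RInt h a c.
Proof. intros. apply (RInt_Chasles h a b c); auto. Qed.
Lemma RInt_swapR (h : R -> R) a b : ex_RInt h a b -> RInt h b a = - RInt h a b.
Proof. intros. rewrite <- (opp_RInt_swap h a b); auto. Qed.
Lemma RInt_plusR (f g : R -> R) a b : ex_RInt f a b -> ex_RInt g a b -> RInt (fun y => f y + g y) a b = RInt f a b + RInt g a b.
Proof. intros. apply (RInt_plus f g a b); auto. Qed.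
Lemma RInt_minusR (f g : R -> R) a b : ex_RInt f a b -> ex_RInt g a b -> RInt (fun y => f y - g y) a b = RInt f a b - RInt g a b.
Proof. intros. apply (RInt_minus f g a b); auto. Qed.
Lemma RInt_scalR (f : R -> R) k a b : ex_RInt f a b -> RInt (fun y => k * f y) a b = k * RInt f a b.
Proof. intros. apply (RInt_scal f a b k); auto. Qed.
Lemma ex_RInt_cont (h : R -> R) u v : (forall y, Rmin u v <= y <= Rmax u v -> continuous h y) -> ex_RInt h u v.
Proof. apply (ex_RInt_continuous (V:=R_CompleteNormedModule)). Qed.

Ltac fixR := repeat match goal with |- context [@RInt ?V ?h ?a ?b] =>
  let r := fresh "r" in generalize (@RInt V h a b : R); intro r end;
  try match goal with |- @eq _ ?a ?b => change (@eq R a b) end.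

Lemma ex_derive_cont (h : R -> R) y : ex_derive h y -> continuous h y.
Proof. apply (ex_derive_continuous (K:=R_AbsRing) (V:=R_NormedModule)). Qed.

Lemma lim_plus {T} {F : (T -> Prop) -> Prop} {FF : Filter F} (u v : T -> R) l1 l2 :
  filterlim u F (locally l1) -> filterlim v F (locally l2) ->
  filterlim (fun t => u t + v t) F (locally (l1 + l2)).
Proof.
  intros H1 H2. apply (filterlim_comp_2 u v Rplus H1 H2).
  apply (filterlim_plus (K := R_AbsRing) (V := R_NormedModule) l1 l2).
Qed.

Lemma lim_pinf_lin (c d : R) : 0 < c ->
  filterlim (fun t => c * t + d) (Rbar_locally p_infty) (Rbar_locally p_infty).
Proof.
  intros Hc P [M HP]. exists ((Rabs M + Rabs d) / c). intros t Ht. apply HP.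
  assert (Hm := Rle_abs M). assert (Hd := Rle_abs (- d)). rewrite Rabs_Ropp in Hd.
  assert (c * ((Rabs M + Rabs d) / c) = Rabs M + Rabs d) by (field; lra).
  assert (c * t > c * ((Rabs M + Rabs d) / c)) by (apply Rmult_lt_compat_l; lra).
  lra.
Qed.

Lemma lim_minf_lin (c d : R) : 0 < c ->
  filterlim (fun t => d - c * t) (Rbar_locally p_infty) (Rbar_locally m_infty).
Proof.
  intros Hc P [M HP]. exists ((Rabs M + Rabs d) / c). intros t Ht. apply HP.
  assert (Hm := Rle_abs (- M)). rewrite Rabs_Ropp in Hm. assert (Hd := Rle_abs d).
  assert (c * ((Rabs M + Rabs d) / c) = Rabs M + Rabs d) by (field; lra).
  assert (c * t > c * ((Rabs M + Rabs d) / c)) by (apply Rmult_lt_compat_l; lra).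
  lra.
Qed.

Lemma lim_opp_minf : filterlim (fun t => - t) (Rbar_locally m_infty) (Rbar_locally p_infty).
Proof.
  intros P [M HP]. exists (- M). intros t Ht. apply HP. lra.
Qed.


Lemma RInt_bound_prim (h phi Phi : R -> R) u v : u <= v ->
  (forall y, u <= y <= v -> continuous h y) ->
  (forall y, u <= y <= v -> Rabs (h y) <= phi y) ->
  (forall y, u <= y <= v -> is_derive Phi y (phi y)) ->
  (forall y, u <= y <= v -> continuous phi y) ->
  Rabs (RInt h u v) <= Phi v - Phi u.
Proof.
  intros Huv Hc Hb Hd Hpc.

  apply (norm_RInt_le h phi u v (RInt h u v) (Phi v - Phi u)); auto.
  - apply (RInt_correct h). apply ex_RInt_cont. rewrite Rmin_left, Rmax_right; auto.
  - apply (is_RInt_derive Phi phi); rewrite Rmin_left, Rmax_right; auto.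
Qed.

Lemma RInt_bound_prim_sym (h phi Phi : R -> R) (D : R -> Prop) u v :
  (forall y z w, D y -> D w -> y <= z <= w -> D z) -> D u -> D v ->
  (forall y, D y -> continuous h y) ->
  (forall y, D y -> Rabs (h y) <= phi y) ->
  (forall y, D y -> is_derive Phi y (phi y)) ->
  (forall y, D y -> continuous phi y) ->
  Rabs (RInt h u v) <= Rabs (Phi v - Phi u).
Proof.
  intros Hconv Du Dv Hc Hb Hd Hpc.
  destruct (Rle_lt_dec u v) as [Huv|Hvu].
  - eapply Rle_trans. apply (RInt_bound_prim h phi Phi u v Huv); intros y Hy; [apply Hc|apply Hb|apply Hd|apply Hpc]; apply (Hconv u y v); auto.
    apply Rle_abs.
  - assert (Hex : ex_RInt h v u).
    { apply ex_RInt_cont. rewrite Rmin_left, Rmax_right by lra. intros y Hy. apply Hc.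
      apply (Hconv v y u); auto. }
    rewrite <- (opp_RInt_swap h v u Hex). unfold opp; simpl. rewrite Rabs_Ropp.
    eapply Rle_trans. apply (RInt_bound_prim h phi Phi v u); try lra; intros y Hy; [apply Hc|apply Hb|apply Hd|apply Hpc]; apply (Hconv v y u); auto; lra.
    rewrite <- Rabs_Ropp. replace (- (Phi v - Phi u)) with (Phi u - Phi v) by ring. apply Rle_abs.
Qed.

Lemma impr_pinfty (h : R -> R) (c C : R) : 0 < c ->
  (forall y, c <= y -> continuous h y) ->
  (forall y, c <= y -> Rabs (h y) <= C / y ^ 2) ->
  exists I, filterlim (fun B => RInt h c B) (Rbar_locally p_infty) (locally I).
Proof.
  intros Hc Hcont Hb.
  set (D := fun y => c <= y).
  apply (cauchy_lim (fun B => RInt h c B) (fun B => - C / B) 0 D).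
  - exists c. intros y Hy. unfold D; lra.
  - intros u v Du Dv. unfold D in *.
    assert (Hex : forall w, c <= w -> ex_RInt h c w).
    { intros w Hw. apply ex_RInt_cont. intros y Hy. apply Hcont.
      rewrite Rmin_left in Hy by lra. lra. }
    replace (RInt h c v - RInt h c u) with (RInt h u v).
    2: { rewrite <- (Chasles h c u v); auto. fixR. ring.
         apply ex_RInt_cont. intros y Hy. apply Hcont.
         apply Rle_trans with (2 := proj1 Hy). apply Rmin_glb; auto. }
    apply (RInt_bound_prim_sym h (fun y => C / y ^ 2) (fun B => - C / B) D); unfold D; auto.
    + intros; lra.
    + intros y Hy. auto_derive. lra. field. lra.
    + intros y Hy. apply ex_derive_cont. auto_derive. nra.
  - assert (H : is_lim (fun y => - C * / y) p_infty (Rbar_mult (- C) (Rbar_inv p_infty))).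
    { apply is_lim_scal_l, is_lim_inv. apply is_lim_id. discriminate. }
    simpl in H. rewrite Rmult_0_r in H. exact H.
Qed.

Lemma cont_sqrt_lin (b : R) y : y <= b -> continuous (fun c => sqrt (b - c)) y.
Proof.
  intros Hy. apply (cont_comp (fun c => b - c) sqrt).
  apply cont_sub. apply continuous_const. apply continuous_id.
  apply continuity_pt_filterlim. apply continuity_pt_sqrt. lra.
Qed.

Lemma impr_left (h : R -> R) (a0 b C D : R) : a0 < b ->
  (forall y, a0 <= y < b -> continuous h y) ->
  (forall y, a0 <= y < b -> Rabs (h y) <= C + D / sqrt (b - y)) ->
  exists I, filterlim (fun c => RInt h a0 c) (at_left b) (locally I).
Proof.
  intros Hab Hcont Hb.
  set (Dm := fun y => a0 <= y < b).
  set (Phi := fun c => C * c - 2 * D * sqrt (b - c)).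
  apply (cauchy_lim (fun c => RInt h a0 c) Phi (Phi b) Dm).
  - assert (He : 0 < b - a0) by lra.
    exists (mkposreal _ He). intros y Hy Hyb. apply ball_R in Hy. simpl in Hy.
    unfold Dm. apply Rabs_def2 in Hy. destruct Hy as [H1 H2]. unfold minus, plus, opp in H1, H2; simpl in H1, H2. split; lra.
  - intros u v Du Dv. unfold Dm in *.
    replace (RInt h a0 v - RInt h a0 u) with (RInt h u v).
    2: { rewrite <- (Chasles h a0 u v); auto. fixR. ring.
         apply ex_RInt_cont. intros y Hy. apply Hcont.
         split. apply Rle_trans with (2 := proj1 Hy). apply Rmin_glb; lra.
         apply Rle_lt_trans with (1 := proj2 Hy). apply Rmax_lub_lt; lra.
         apply ex_RInt_cont. intros y Hy. apply Hcont.
         split. apply Rle_trans with (2 := proj1 Hy). apply Rmin_glb; lra.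
         apply Rle_lt_trans with (1 := proj2 Hy). apply Rmax_lub_lt; lra. }
    apply (RInt_bound_prim_sym h (fun y => C + D / sqrt (b - y)) Phi Dm); unfold Dm; auto.
    + intros; lra.
    + intros y Hy. unfold Phi. auto_derive. lra.
      replace (b + - y) with (b - y) by ring.
      assert (0 < sqrt (b - y)) by (apply sqrt_lt_R0; lra). field. lra.
    + intros y Hy. apply ex_derive_cont. auto_derive.
      assert (0 < sqrt (b - y)) by (apply sqrt_lt_R0; lra).
      replace (b + - y) with (b - y) by ring. repeat split; lra.
  - apply (filterlim_filter_le_1 (F := locally b)). apply filter_le_within.
    change (continuous Phi b). unfold Phi. apply cont_sub. apply cont_mul. apply continuous_const. apply continuous_id.
    apply cont_mul. apply continuous_const. apply cont_sqrt_lin. lra.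
Qed.

Lemma cont_sqrt_lin2 (b : R) y : b <= y -> continuous (fun c => sqrt (c - b)) y.
Proof.
  intros Hy. apply (cont_comp (fun c => c - b) sqrt).
  apply cont_sub. apply continuous_id. apply continuous_const.
  apply continuity_pt_filterlim. apply continuity_pt_sqrt. lra.
Qed.

Lemma impr_right (h : R -> R) (a0 b C D : R) : a0 < b ->
  (forall y, a0 < y <= b -> continuous h y) ->
  (forall y, a0 < y <= b -> Rabs (h y) <= C + D / sqrt (y - a0)) ->
  exists I, filterlim (fun c => RInt h c b) (at_right a0) (locally I).
Proof.
  intros Hab Hcont Hb.
  set (Dm := fun y => a0 < y <= b).
  set (Phi := fun c => C * c + 2 * D * sqrt (c - a0)).
  apply (cauchy_lim (fun c => RInt h c b) Phi (Phi a0) Dm).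
  - assert (He : 0 < b - a0) by lra.
    exists (mkposreal _ He). intros y Hy Hyb. apply ball_R in Hy. simpl in Hy.
    unfold Dm. apply Rabs_def2 in Hy. destruct Hy as [H1 H2]. unfold minus, plus, opp in H1, H2; simpl in H1, H2. split; lra.
  - intros u v Du Dv. unfold Dm in *.
    assert (Hex : forall p q, a0 < p <= b -> a0 < q <= b -> ex_RInt h p q).
    { intros p q Hp Hq. apply ex_RInt_cont. intros y Hy. apply Hcont.
      split. apply Rlt_le_trans with (2 := proj1 Hy). apply Rmin_glb_lt; lra.
      apply Rle_trans with (1 := proj2 Hy). apply Rmax_lub; lra. }
    replace (RInt h v b - RInt h u b) with (- RInt h u v).
    2: { rewrite <- (Chasles h u v b). fixR. ring. apply Hex; lra. apply Hex; lra. }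
    rewrite Rabs_Ropp.
    apply (RInt_bound_prim_sym h (fun y => C + D / sqrt (y - a0)) Phi Dm); unfold Dm; auto.
    + intros; lra.
    + intros y Hy. unfold Phi. auto_derive. lra.
      replace (y + - a0) with (y - a0) by ring.
      assert (0 < sqrt (y - a0)) by (apply sqrt_lt_R0; lra). field. lra.
    + intros y Hy. apply ex_derive_cont. auto_derive.
      assert (0 < sqrt (y - a0)) by (apply sqrt_lt_R0; lra).
      replace (y + - a0) with (y - a0) by ring. repeat split; lra.
  - apply (filterlim_filter_le_1 (F := locally a0)). apply filter_le_within.
    change (continuous Phi a0). unfold Phi.
    apply cont_add. apply cont_mul. apply continuous_const. apply continuous_id.
    apply cont_mul. apply continuous_const. apply cont_sqrt_lin2. lra.
Qed.


Lemma Pk_cont a w : 0 < a -> w <> 0 -> continuous (Pk a) w.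
Proof. intros. apply ex_derive_cont. eexists. apply Pk_derive; auto. Qed.

Lemma Ka_cont a w : 0 < a -> w <> 0 -> continuous (Ka a) w.
Proof.
  intros Ha Hw. apply ex_derive_cont. unfold Ka. auto_derive.
  assert (0 < PI) by apply PI_RGT_0.
  assert (0 < w * w) by nra.
  assert (0 < a * a) by nra.
  assert (0 < PI * w * (w * (w * 1) + a * (a * 1)) \/ PI * w * (w * (w * 1) + a * (a * 1)) < 0).
  { destruct (Rlt_or_le 0 w). left. apply Rmult_lt_0_compat. nra. nra. right.
    assert (w < 0) by lra. assert (PI * w < 0) by nra. nra. }
  lra.
Qed.

Lemma Ka_odd a w : Ka a (- w) = - Ka a w.
Proof.
  unfold Ka. destruct (Req_dec w 0) as [->|Hw].
  - rewrite Ropp_0. unfold Rdiv. rewrite !Rmult_0_r, Rmult_0_l, Rinv_0. ring.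
  - destruct (Req_dec a 0) as [->|Hna]. unfold Rdiv; simpl; ring.
    assert (0 < PI) by apply PI_RGT_0.
    field. split; [|split]; try lra. nra.
Qed.

Lemma RInt_sub_minus (h : R -> R) c u v : ex_RInt h (c - u) (c - v) ->
  RInt (fun y => h (c - y)) u v = RInt h (c - v) (c - u).
Proof.
  intros Hex.
  assert (E0 : is_RInt h (-1 * u + c) (-1 * v + c) (RInt h (c - u) (c - v))).
  { replace (-1 * u + c) with (c - u) by ring.
    replace (-1 * v + c) with (c - v) by ring. apply (RInt_correct h). exact Hex. }
  assert (E := is_RInt_comp_lin h (-1) c u v _ E0).
  assert (E1 := is_RInt_scal _ u v (-1) _ E).
  assert (E2 : is_RInt (fun y => h (c - y)) u v (scal (-1) (RInt h (c - u) (c - v)))).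
  { apply (is_RInt_ext _ _ u v _) with (2 := E1).
    intros y _. change (-1 * (-1 * h (-1 * y + c)) = h (c - y)).
    replace (-1 * y + c) with (c - y) by ring. ring. }
  assert (E3 := is_RInt_unique (V:=R_CompleteNormedModule) _ _ _ _ E2). rewrite E3. unfold scal; simpl; unfold mult; simpl.
  rewrite (RInt_swapR h (c - v) (c - u)). fixR. ring.
  apply (ex_RInt_swap h). exact Hex.
Qed.

Lemma RInt_sub_plus (h : R -> R) c u v : ex_RInt h (c + u) (c + v) ->
  RInt (fun y => h (c + y)) u v = RInt h (c + u) (c + v).
Proof.
  intros Hex.
  assert (E := RInt_comp_lin h 1 c u v).
  replace (1 * u + c) with (c + u) in E by ring.
  replace (1 * v + c) with (c + v) in E by ring.
  rewrite <- (E Hex). apply RInt_ext. intros y _. unfold scal; simpl; unfold mult; simpl.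
  replace (1 * y + c) with (c + y) by ring. ring.
Qed.


Section Main.
Variables (a : R) (f : R -> R) (x M0 M1 : R).
Hypothesis Ha : 0 < a.
Hypothesis Hx : 0 < x <= PI / 2.
Hypothesis Hper : forall y, f (y + 2 * PI) = f y.
Hypothesis Hd1 : forall y, ex_derive f y.
Hypothesis Hd2 : forall y, ex_derive (Derive f) y.
Hypothesis HM0 : forall y, Rabs (f y) <= M0.
Hypothesis HM1 : forall y, Rabs (Derive f y) <= M1.
Hypothesis Hev : forall y, f (- y) = f y.
Hypothesis Hf0 : f 0 = 0.
Hypothesis Hmono : forall y, 0 <= y < PI -> 0 <= Derive f y.

Notation F := (Derive f).

Lemma fcont y : continuous f y.
Proof. apply ex_derive_cont, Hd1. Qed.
Lemma Fcont y : continuous F y.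
Proof. apply ex_derive_cont, Hd2. Qed.

Lemma F_odd y : F (- y) = - F y.
Proof.
  assert (H1 : is_derive (fun t => f (- t)) y (-1 * F (- y))).
  { apply (is_derive_comp f (fun t => - t)). apply Derive_correct, Hd1.
    auto_derive; auto. }
  assert (H2 : Derive (fun t => f (- t)) y = F y) by (apply Derive_ext; auto).
  assert (H3 : Derive (fun t => f (- t)) y = -1 * F (- y)) by (apply is_derive_unique; exact H1).
  lra.
Qed.

Lemma F_per y : F (y + 2 * PI) = F y.
Proof.
  assert (H1 : is_derive (fun t => f (t + 2 * PI)) y (1 * F (y + 2 * PI))).
  { apply (is_derive_comp f (fun t => t + 2 * PI)). apply Derive_correct, Hd1.
    auto_derive; auto. }
  assert (H2 : Derive (fun t => f (t + 2 * PI)) y = F y) by (apply Derive_ext; auto).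
  assert (H3 : Derive (fun t => f (t + 2 * PI)) y = 1 * F (y + 2 * PI)) by (apply is_derive_unique; exact H1).
  lra.
Qed.

Lemma F_pern n y : F (y + 2 * PI * INR n) = F y.
Proof.
  induction n as [|n IH].
  - simpl. f_equal. ring.
  - rewrite S_INR. replace (y + 2 * PI * (INR n + 1)) with ((y + 2 * PI * INR n) + 2 * PI) by ring.
    rewrite F_per. exact IH.
Qed.

Lemma f_pern n y : f (y + 2 * PI * INR n) = f y.
Proof.
  induction n as [|n IH].
  - simpl. f_equal. ring.
  - rewrite S_INR. replace (y + 2 * PI * (INR n + 1)) with ((y + 2 * PI * INR n) + 2 * PI) by ring.
    rewrite Hper. exact IH.
Qed.

Lemma f_2pin n : f (2 * PI * INR n) = 0.
Proof. rewrite <- Hf0. rewrite <- (f_pern n 0). f_equal. ring. Qed.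

Definition Lam z := F z * Pk a (x - z).

Lemma Lam_cont z : z <> x -> continuous Lam z.
Proof.
  intros Hz. unfold Lam. apply cont_mul. apply Fcont.
  apply (cont_comp (fun z => x - z) (Pk a)).
  apply cont_sub. apply continuous_const. apply continuous_id.
  apply Pk_cont; auto. lra.
Qed.

Lemma ex_RInt_Lam u v : (x < Rmin u v \/ Rmax u v < x) -> ex_RInt Lam u v.
Proof.
  intros H. apply ex_RInt_cont. intros y Hy. apply Lam_cont. intros ->. lra.
Qed.

Definition Yk (k : nat) s := Lam (2 * PI * INR k + s) + Lam (- (2 * PI * INR k) - s)
  + Lam (2 * PI * (INR k + 1) - s) + Lam (- (2 * PI * (INR k + 1)) + s).

Fixpoint Zs (N : nat) s := match N with O => Yk 0 s - Lam s | S n => Zs n s + Yk (S n) s end.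

Lemma Yk_eq k s : Yk k s = F s * bk a x k s.
Proof.
  unfold Yk, bk, Dd, Lam.
  rewrite (Rplus_comm (2 * PI * INR k) s), F_pern.
  replace (- (2 * PI * INR k) - s) with (- (s + 2 * PI * INR k)) by ring. rewrite F_odd, F_pern.
  replace (2 * PI * (INR k + 1) - s) with (- s + 2 * PI * INR (S k)) by (rewrite S_INR; ring).
  rewrite F_pern, F_odd.
  replace (- (2 * PI * (INR k + 1)) + s) with (s + - (2 * PI * INR (S k))) by (rewrite S_INR; ring).
  replace (F (s + - (2 * PI * INR (S k)))) with (F s).
  2: { rewrite <- (F_pern (S k) (s + - (2 * PI * INR (S k)))). f_equal. ring. }
  rewrite S_INR.
  replace (x - - (s + 2 * PI * INR k)) with (x + (2 * PI * INR k + s)) by ring.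
  replace (x - (s + 2 * PI * INR k)) with (x - (2 * PI * INR k + s)) by ring.
  replace (x - (- s + 2 * PI * (INR k + 1))) with (x - (2 * PI * INR k + 2 * PI - s)) by ring.
  replace (x - (- (2 * PI * (INR k + 1)) + s)) with (x + (2 * PI * INR k + 2 * PI - s)) by ring.
  replace (x + (s + 2 * PI * INR k)) with (x + (2 * PI * INR k + s)) by ring.
  replace (x - (s + - (2 * PI * (INR k + 1)))) with (x + (2 * PI * INR k + 2 * PI - s)) by ring.
  ring.
Qed.

Lemma FW_eq N s : Lam s + Zs N s = F s * Ws a x N s.
Proof.
  induction N as [|n IH]; simpl.
  - rewrite Yk_eq. ring.
  - rewrite Yk_eq. rewrite <- Rplus_assoc, IH. ring.
Qed.


Lemma cont_shift_p (g : R -> R) c s : continuous g (c + s) -> continuous (fun s => g (c + s)) s.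
Proof.
  intros H. apply (cont_comp (fun s => c + s) g); auto.
  apply cont_add. apply continuous_const. apply continuous_id.
Qed.
Lemma cont_shift_m (g : R -> R) c s : continuous g (c - s) -> continuous (fun s => g (c - s)) s.
Proof.
  intros H. apply (cont_comp (fun s => c - s) g); auto.
  apply cont_sub. apply continuous_const. apply continuous_id.
Qed.

Lemma Lam_shift_p c : (x < c \/ c + PI < x) ->
  ex_RInt (fun s => Lam (c + s)) 0 PI /\ RInt (fun s => Lam (c + s)) 0 PI = RInt Lam c (c + PI).
Proof.
  intros H. assert (HPI := PI_pos).
  assert (Hex : ex_RInt Lam (c + 0) (c + PI)).
  { apply ex_RInt_Lam. rewrite Rmin_left, Rmax_right by lra. lra. }
  split.
  - apply ex_RInt_cont. intros y Hy. rewrite Rmin_left, Rmax_right in Hy by lra.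
    apply cont_shift_p, Lam_cont. lra.
  - rewrite RInt_sub_plus by auto. f_equal. ring.
Qed.

Lemma Lam_shift_m c : (x < c - PI \/ c < x) ->
  ex_RInt (fun s => Lam (c - s)) 0 PI /\ RInt (fun s => Lam (c - s)) 0 PI = RInt Lam (c - PI) c.
Proof.
  intros H. assert (HPI := PI_pos).
  assert (Hex : ex_RInt Lam (c - 0) (c - PI)).
  { apply ex_RInt_Lam. rewrite Rmin_right, Rmax_left by lra. lra. }
  split.
  - apply ex_RInt_cont. intros y Hy. rewrite Rmin_left, Rmax_right in Hy by lra.
    apply cont_shift_m, Lam_cont. lra.
  - rewrite RInt_sub_minus by auto. f_equal. ring.
Qed.

Lemma RInt_Yk k : (1 <= k)%nat -> ex_RInt (Yk k) 0 PI /\ RInt (Yk k) 0 PI = RInt Lam (2 * PI * INR k) (2 * PI * (INR k + 1))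
                     + RInt Lam (- (2 * PI * (INR k + 1))) (- (2 * PI * INR k)).
Proof.
  intros Hk. assert (HPI := PI_pos).
  assert (Hk1 : 1 <= INR k) by (apply le_INR in Hk; simpl in Hk; lra).
  destruct (Lam_shift_p (2 * PI * INR k)) as [E1 R1]. left; nra.
  destruct (Lam_shift_m (- (2 * PI * INR k))) as [E2 R2]. right; nra.
  destruct (Lam_shift_m (2 * PI * (INR k + 1))) as [E3 R3]. left; nra.
  destruct (Lam_shift_p (- (2 * PI * (INR k + 1)))) as [E4 R4]. right; nra.
  unfold Yk.
  split.
  - apply (ex_RInt_plus (V := R_NormedModule)); auto. apply (ex_RInt_plus (V := R_NormedModule)); auto.
    apply (ex_RInt_plus (V := R_NormedModule)); auto.
  - rewrite RInt_plusR; auto. 2: apply (ex_RInt_plus (V := R_NormedModule)); auto; apply (ex_RInt_plus (V := R_NormedModule)); auto.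
    rewrite RInt_plusR; auto. 2: apply (ex_RInt_plus (V := R_NormedModule)); auto.
    rewrite RInt_plusR; auto.
    rewrite R1, R2, R3, R4.
    rewrite <- (Chasles Lam (2 * PI * INR k) (2 * PI * INR k + PI) (2 * PI * (INR k + 1))).
    2, 3: apply ex_RInt_Lam; rewrite Rmin_left, Rmax_right by nra; left; nra.
    rewrite <- (Chasles Lam (- (2 * PI * (INR k + 1))) (- (2 * PI * INR k) - PI) (- (2 * PI * INR k))).
    2, 3: apply ex_RInt_Lam; rewrite Rmin_left, Rmax_right by nra; right; nra.
    replace (2 * PI * (INR k + 1) - PI) with (2 * PI * INR k + PI) by ring.
    replace (- (2 * PI * (INR k + 1)) + PI) with (- (2 * PI * INR k) - PI) by ring.
    fixR. ring.
Qed.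

Definition Z0 s := Lam (0 - s) + Lam (2 * PI - s) + Lam (- (2 * PI) + s).

Lemma Zs0_eq s : Zs 0 s = Z0 s.
Proof.
  simpl. unfold Yk, Z0. simpl INR.
  replace (2 * PI * 0 + s) with s by ring.
  replace (- (2 * PI * 0) - s) with (0 - s) by ring.
  replace (2 * PI * (0 + 1) - s) with (2 * PI - s) by ring.
  replace (- (2 * PI * (0 + 1)) + s) with (- (2 * PI) + s) by ring.
  ring.
Qed.

Lemma RInt_Zs N : ex_RInt (Zs N) 0 PI /\ RInt (Zs N) 0 PI = RInt Lam (- (2 * PI * (INR N + 1))) 0 + RInt Lam PI (2 * PI * (INR N + 1)).
Proof.
  assert (HPI := PI_pos).
  induction N as [|n [IHe IHr]].
  - destruct (Lam_shift_m 0) as [E2 R2]. right; lra.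
    destruct (Lam_shift_m (2 * PI)) as [E3 R3]. left; lra.
    destruct (Lam_shift_p (- (2 * PI))) as [E4 R4]. right; lra.
    assert (EZ : ex_RInt Z0 0 PI).
    { unfold Z0. apply (ex_RInt_plus (V := R_NormedModule)); auto. apply (ex_RInt_plus (V := R_NormedModule)); auto. }
    split.
    + apply (ex_RInt_ext Z0). intros; rewrite Zs0_eq; auto. auto.
    + rewrite (RInt_ext (Zs 0) Z0) by (intros; apply Zs0_eq).
      unfold Z0. rewrite RInt_plusR; auto. 2: apply (ex_RInt_plus (V := R_NormedModule)); auto.
      rewrite RInt_plusR; auto. rewrite R2, R3, R4. simpl INR.
      replace (2 * PI * (0 + 1)) with (2 * PI) by ring.
      rewrite <- (Chasles Lam (- (2 * PI)) (0 - PI) 0).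
      2, 3: apply ex_RInt_Lam; rewrite Rmin_left, Rmax_right by lra; right; lra.
      replace (- (2 * PI) + PI) with (0 - PI) by ring.
      replace (2 * PI - PI) with PI by ring.
      fixR. ring.
  - destruct (RInt_Yk (S n)) as [Ey Ry]. lia.
    assert (Hn := INR_ge0 n).
    assert (Hz : forall s, Zs (S n) s = Zs n s + Yk (S n) s) by reflexivity.
    split.
    + apply (ex_RInt_ext (fun s => Zs n s + Yk (S n) s)). intros; rewrite Hz; auto.
      apply (ex_RInt_plus (V := R_NormedModule)); auto.
    + rewrite (RInt_ext (Zs (S n)) (fun s => Zs n s + Yk (S n) s)) by (intros; apply Hz).
      rewrite RInt_plusR; auto. rewrite IHr, Ry. rewrite S_INR.
      rewrite <- (Chasles Lam (- (2 * PI * (INR n + 1 + 1))) (- (2 * PI * (INR n + 1))) 0).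
      2, 3: apply ex_RInt_Lam; rewrite Rmin_left, Rmax_right by nra; right; nra.
      rewrite <- (Chasles Lam PI (2 * PI * (INR n + 1)) (2 * PI * (INR n + 1 + 1))).
      2, 3: apply ex_RInt_Lam; rewrite Rmin_left, Rmax_right by nra; left; nra.
      fixR. ring.
Qed.


Definition gK y := f (x - y) * Ka a y.

Lemma IBP_der y : y <> 0 ->
  is_derive (fun y => f (x - y) * Pk a y) y (- F (x - y) * Pk a y + f (x - y) * Ka a y).
Proof.
  intros Hy.
  assert (H1 : is_derive (fun y => f (x - y)) y (-1 * F (x - y))).
  { apply (is_derive_comp f (fun y => x - y)). apply Derive_correct, Hd1. auto_derive; auto. }
  assert (H2 := Pk_derive a y Ha Hy).
  assert (H := is_derive_mult (K:=R_AbsRing) _ _ y _ _ H1 H2 (fun n m => Rmult_comm n m)).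
  replace (- F (x - y) * Pk a y + f (x - y) * Ka a y) with
    (plus (mult (-1 * F (x - y)) (Pk a y)) (mult (f (x - y)) (Ka a y))).
  exact H. unfold plus, mult; simpl. ring.
Qed.

Lemma gK_cont y : y <> 0 -> continuous gK y.
Proof.
  intros Hy. unfold gK. apply cont_mul. apply (cont_shift_m f x y), fcont. apply Ka_cont; auto.
Qed.

Lemma FP_cont y : y <> 0 -> continuous (fun y => F (x - y) * Pk a y) y.
Proof.
  intros Hy. apply cont_mul. apply (cont_shift_m F x y), Fcont. apply Pk_cont; auto.
Qed.

Lemma IBP u v : (forall y, Rmin u v <= y <= Rmax u v -> y <> 0) ->
  RInt gK u v = f (x - v) * Pk a v - f (x - u) * Pk a u + RInt (fun y => F (x - y) * Pk a y) u v.
Proof.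
  intros H0.
  set (dPhi := fun y => - F (x - y) * Pk a y + f (x - y) * Ka a y).
  assert (Hc : forall y, Rmin u v <= y <= Rmax u v -> continuous dPhi y).
  { intros y Hy. unfold dPhi. apply cont_add. apply cont_mul.
    apply cont_opp. apply (cont_shift_m F x y), Fcont. apply Pk_cont; auto.
    apply gK_cont; auto. }
  assert (HI := is_RInt_derive (V := R_CompleteNormedModule) (fun y => f (x - y) * Pk a y) dPhi u v
     (fun y Hy => IBP_der y (H0 y Hy)) Hc).
  assert (E1 := is_RInt_unique (V := R_CompleteNormedModule) _ _ _ _ HI).
  assert (Ex1 : ex_RInt dPhi u v) by (eexists; exact HI).
  assert (Ex2 : ex_RInt (fun y => F (x - y) * Pk a y) u v).
  { apply ex_RInt_cont. intros y Hy. apply FP_cont; auto. }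
  rewrite (RInt_ext gK (fun y => dPhi y + F (x - y) * Pk a y)).
  2: { intros y _. unfold gK, dPhi. fixR. ring. }
  rewrite RInt_plusR; auto. rewrite E1. unfold minus, plus, opp; simpl. ring.
Qed.


Lemma RInt_constR (c u v : R) : RInt (fun _ => c) u v = (v - u) * c.
Proof. rewrite (RInt_const (V := R_CompleteNormedModule)). reflexivity. Qed.

Lemma Gq_cont s : s <> x -> Rabs (s - x) < 2 * PI -> continuous (Gq a x) s.
Proof.
  intros Hs Hb. unfold Gq, qk. simpl INR.
  apply cont_sub. 2: apply continuous_const.
  assert (Hab : continuous (fun s => Rabs (s - x)) s).
  { apply continuous_Rabs_comp. apply cont_sub. apply continuous_id. apply continuous_const. }
  assert (Hne : Rabs (s - x) <> 0).
  { intros H. apply Rabs_eq_0 in H. apply Hs. lra. }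
  apply cont_add.
  - apply (cont_comp (fun s => Rabs (s - x)) (fun u => Pk a (2 * PI * 0 + u))); auto.
    apply (cont_shift_p (Pk a)). apply Pk_cont; auto. lra.
  - apply (cont_comp (fun s => Rabs (s - x)) (fun u => Pk a (2 * PI * (0 + 1) - u))); auto.
    apply (cont_shift_m (Pk a)). apply Pk_cont; auto. lra.
Qed.

Lemma F_nonneg_le s : 0 <= s < PI -> 0 <= F s <= M1.
Proof.
  intros Hs. split. apply Hmono; auto.
  apply Rle_trans with (Rabs (F s)). apply Rle_abs. apply HM1.
Qed.

Lemma f_mono_eps eps : 0 < eps < x -> f (x - eps) <= f (x + eps).
Proof.
  intros He.
  destruct (MVT_gen f (x - eps) (x + eps) F) as [c [Hc Heq]].
  - intros y _. apply Derive_correct, Hd1.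
  - intros y _. apply continuity_pt_filterlim, fcont.
  - rewrite Rmin_left, Rmax_right in Hc by lra.
    assert (0 <= F c) by (apply Hmono; lra).
    nra.
Qed.

Lemma pos_part N eps : 0 < eps < x ->
  RInt gK eps (2 * PI * (INR N + 1) + x) =
  - f (x - eps) * Pk a eps + RInt Lam (- (2 * PI * (INR N + 1))) (x - eps).
Proof.
  intros He. assert (HPI := PI_pos). assert (Hn := INR_ge0 N).
  rewrite IBP.
  2: { intros y Hy. rewrite Rmin_left, Rmax_right in Hy by nra. lra. }
  replace (x - (2 * PI * (INR N + 1) + x)) with (- (2 * PI * INR (S N))) by (rewrite S_INR; ring).
  rewrite Hev, f_2pin.
  rewrite (RInt_ext _ (fun y => Lam (x - y))).
  2: { intros y _. unfold Lam. f_equal. f_equal. ring. }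
  rewrite RInt_sub_minus.
  - replace (x - (2 * PI * (INR N + 1) + x)) with (- (2 * PI * (INR N + 1))) by ring. fixR. ring.
  - apply ex_RInt_Lam. rewrite Rmin_right, Rmax_left by nra. right. nra.
Qed.

Lemma neg_part N eps : 0 < eps < x ->
  RInt gK (x - 2 * PI * (INR N + 1)) (- eps) =
  f (x + eps) * Pk a eps + RInt Lam (x + eps) (2 * PI * (INR N + 1)).
Proof.
  intros He. assert (HPI := PI_pos). assert (Hn := INR_ge0 N).
  rewrite IBP.
  2: { intros y Hy. rewrite Rmin_left, Rmax_right in Hy by nra. lra. }
  replace (x - (x - 2 * PI * (INR N + 1))) with (2 * PI * INR (S N)) by (rewrite S_INR; ring).
  rewrite f_2pin. replace (x - - eps) with (x + eps) by ring. rewrite Pk_even.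
  rewrite (RInt_ext _ (fun y => Lam (x - y))).
  2: { intros y _. unfold Lam. f_equal. f_equal. ring. }
  rewrite RInt_sub_minus.
  - replace (x - - eps) with (x + eps) by ring.
    replace (x - (x - 2 * PI * (INR N + 1))) with (2 * PI * (INR N + 1)) by ring. fixR. ring.
  - apply ex_RInt_Lam. rewrite Rmin_right, Rmax_left by nra. left. nra.
Qed.


Ltac fixH H := match type of H with @eq _ ?a ?b => change (@eq R a b) in H end.

Definition Gf s := F s * Gq a x s.

Lemma ex_RInt_Gf u v : 0 <= u -> u <= v -> v <= 2 * x -> (v < x \/ x < u) -> ex_RInt Gf u v.
Proof.
  intros H1 H2 H3 H4. assert (HPI := PI_pos).
  apply ex_RInt_cont. rewrite Rmin_left, Rmax_right by lra. intros y Hy.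
  unfold Gf. apply cont_mul. apply Fcont. apply Gq_cont. lra.
  apply Rabs_def1; lra.
Qed.

Lemma ex_RInt_Zs_sub N u v : 0 <= u -> u <= v -> v <= PI -> ex_RInt (Zs N) u v.
Proof.
  intros H1 H2 H3. destruct (RInt_Zs N) as [EZ _].
  apply (ex_RInt_Chasles_2 (V := R_CompleteNormedModule) _ 0). lra.
  apply (ex_RInt_Chasles_1 (V := R_CompleteNormedModule) _ _ _ PI). lra. exact EZ.
Qed.

Lemma SL N u v : 0 <= u -> u <= v -> v <= 2 * x -> (v < x \/ x < u) ->
  RInt Lam u v + RInt (Zs N) u v <= RInt Gf u v + - Pk a (2 * PI * INR N + PI) * M1 * (v - u).
Proof.
  intros H1 H2 H3 H4. assert (HPI := PI_pos).
  set (e := - Pk a (2 * PI * INR N + PI)).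
  assert (He : 0 <= e) by (unfold e; generalize (Pk_le0 a (2 * PI * INR N + PI)); lra).
  assert (EL : ex_RInt Lam u v) by (apply ex_RInt_Lam; rewrite Rmin_left, Rmax_right by lra; lra).
  assert (EZ : ex_RInt (Zs N) u v) by (apply ex_RInt_Zs_sub; lra).
  assert (EG := ex_RInt_Gf u v H1 H2 H3 H4).
  rewrite <- RInt_plusR by auto.
  rewrite (RInt_ext _ (fun s => F s * Ws a x N s)) by (intros; apply FW_eq).
  assert (Hc : RInt (fun s => Gf s + e * M1) u v = RInt Gf u v + e * M1 * (v - u)).
  { rewrite RInt_plusR; auto. rewrite RInt_constR. fixR. ring.
    apply ex_RInt_cont. intros; apply continuous_const. }
  fixH Hc. rewrite <- Hc.
  apply RInt_le; auto.
  - apply (ex_RInt_ext (fun s => Lam s + Zs N s)). intros; apply FW_eq.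
    apply (ex_RInt_plus (V := R_NormedModule)); auto.
  - apply (ex_RInt_plus (V := R_NormedModule)); auto. apply ex_RInt_cont. intros; apply continuous_const.
  - intros s Hs. unfold Gf.
    assert (HF := F_nonneg_le s ltac:(lra)).
    assert (HW := W_le_G a x Ha Hx N s ltac:(lra) ltac:(lra)).
    assert (Ee : e = - Pk a (2 * PI * INR N + PI)) by reflexivity.
    assert (0 <= F s * (Gq a x s + e - Ws a x N s)) by (apply Rmult_le_pos; lra).
    assert (0 <= (M1 - F s) * e) by (apply Rmult_le_pos; lra).
    nra.
Qed.

Lemma finite_bound N eps : 0 < eps < x ->
  RInt gK eps (2 * PI * (INR N + 1) + x) + RInt gK (x - 2 * PI * (INR N + 1)) (- eps) <=
  RInt Gf 0 (x - eps) + RInt Gf (x + eps) (2 * x)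
  + 2 * x * M1 * (- Pk a (2 * PI * INR N + PI)) + 2 * eps * M1 * (- Pk a x - Pk a (PI / 2)).
Proof.
  intros He. assert (HPI := PI_pos). assert (Hn := INR_ge0 N).
  rewrite pos_part, neg_part by auto.
  set (M := 2 * PI * (INR N + 1)).
  assert (HM : 2 * PI <= M) by (unfold M; nra).
  set (e := - Pk a (2 * PI * INR N + PI)).
  assert (He0 : 0 <= e) by (unfold e; generalize (Pk_le0 a (2 * PI * INR N + PI)); lra).
  set (C := - Pk a x - Pk a (PI / 2)).
  assert (HC : 0 <= C) by (unfold C; generalize (Pk_le0 a x) (Pk_le0 a (PI / 2)); lra).
  assert (Hbd : Pk a eps * (f (x + eps) - f (x - eps)) <= 0).
  { generalize (Pk_le0 a eps) (f_mono_eps eps He). nra. }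
  assert (E1 : RInt Lam (- M) 0 + RInt Lam 0 (x - eps) = RInt Lam (- M) (x - eps)).
  { apply Chasles; apply ex_RInt_Lam; rewrite Rmin_left, Rmax_right by lra; lra. }
  assert (E2 : RInt Lam (x + eps) PI + RInt Lam PI M = RInt Lam (x + eps) M).
  { apply Chasles; apply ex_RInt_Lam; rewrite Rmin_left, Rmax_right by lra; lra. }
  destruct (RInt_Zs N) as [EZ RZ]. fold M in RZ.
  assert (E3 : RInt (Zs N) 0 (x - eps) + RInt (Zs N) (x - eps) PI = RInt (Zs N) 0 PI).
  { apply Chasles; apply ex_RInt_Zs_sub; lra. }
  assert (E4 : RInt (Zs N) (x - eps) (x + eps) + RInt (Zs N) (x + eps) PI = RInt (Zs N) (x - eps) PI).
  { apply Chasles; apply ex_RInt_Zs_sub; lra. }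
  assert (E5 : RInt (Zs N) (x + eps) (2 * x) + RInt (Zs N) (2 * x) PI = RInt (Zs N) (x + eps) PI).
  { apply Chasles; apply ex_RInt_Zs_sub; lra. }
  assert (E6 : RInt Lam (x + eps) (2 * x) + RInt Lam (2 * x) PI = RInt Lam (x + eps) PI).
  { apply Chasles; apply ex_RInt_Lam; rewrite Rmin_left, Rmax_right by lra; lra. }
  assert (I1 := SL N 0 (x - eps) ltac:(lra) ltac:(lra) ltac:(lra) ltac:(lra)).
  assert (I2 := SL N (x + eps) (2 * x) ltac:(lra) ltac:(lra) ltac:(lra) ltac:(lra)).
  fold e in I1, I2.
  assert (I3 : RInt Lam (2 * x) PI + RInt (Zs N) (2 * x) PI <= 0).
  { assert (EL : ex_RInt Lam (2 * x) PI) by (apply ex_RInt_Lam; rewrite Rmin_left, Rmax_right by lra; lra).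
    assert (EZ' : ex_RInt (Zs N) (2 * x) PI) by (apply ex_RInt_Zs_sub; lra).
    rewrite <- RInt_plusR by auto.
    rewrite (RInt_ext _ (fun s => F s * Ws a x N s)) by (intros; apply FW_eq).
    replace 0 with (RInt (fun _ => 0) (2 * x) PI) by (rewrite RInt_constR; fixR; ring).
    apply RInt_le. lra.
    apply (ex_RInt_ext (fun s => Lam s + Zs N s)). intros; apply FW_eq.
    apply (ex_RInt_plus (V := R_NormedModule)); auto.
    apply ex_RInt_cont. intros; apply continuous_const.
    intros s Hs. assert (HF := F_nonneg_le s ltac:(lra)).
    assert (HW := W_le_0 a x Ha Hx N s ltac:(lra)). nra. }
  assert (I4 : RInt (Zs N) (x - eps) (x + eps) <= 2 * eps * M1 * C).
  { replace (2 * eps * M1 * C) with (RInt (fun _ => M1 * C) (x - eps) (x + eps)) by (rewrite RInt_constR; fixR; ring).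
    apply RInt_le. lra. apply ex_RInt_Zs_sub; lra.
    apply ex_RInt_cont. intros; apply continuous_const.
    intros s Hs. assert (HF := F_nonneg_le s ltac:(lra)).
    assert (HW := W_hole a x Ha Hx N s ltac:(lra)). fold C in HW.
    assert (Zs N s = F s * (Ws a x N s - Pk a (x - s))).
    { assert (H := FW_eq N s). unfold Lam in H. lra. }
    nra. }
  fixH E1. fixH E2. fixH RZ. fixH E3. fixH E4. fixH E5. fixH E6.
  assert (HM1p : 0 <= M1) by (generalize (HM1 0) (Rabs_pos (F 0)); lra).
  assert (0 <= e * M1 * eps) by (apply Rmult_le_pos; [apply Rmult_le_pos|]; lra).
  lra.
Qed.


Lemma M0_pos : 0 <= M0.
Proof. generalize (HM0 0) (Rabs_pos (f 0)); lra. Qed.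
Lemma M1_pos : 0 <= M1.
Proof. generalize (HM1 0) (Rabs_pos (F 0)); lra. Qed.

Lemma Ka_bound eps y : 0 < eps <= y -> 0 <= Ka a y <= (a ^ 2 / (PI * eps)) / y ^ 2.
Proof.
  intros Hy. assert (HPI := PI_pos). unfold Ka.
  assert (0 < a ^ 2) by (apply pow2_gt_0; lra).
  assert (0 < y ^ 2) by (apply pow2_gt_0; lra).
  assert (0 < PI * y * (y ^ 2 + a ^ 2)) by (apply Rmult_lt_0_compat; nra).
  split.
  - apply Rlt_le, Rdiv_lt_0_compat; auto.
  - replace (a ^ 2 / (PI * eps) / y ^ 2) with (a ^ 2 / (PI * eps * y ^ 2)) by (field; nra).
    unfold Rdiv. apply Rmult_le_compat_l. lra.
    apply Rinv_le_contravar. apply Rmult_lt_0_compat; nra.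
    assert (eps * y ^ 2 <= y * (y ^ 2 + a ^ 2)) by nra. nra.
Qed.

Lemma gK_bound eps y : 0 < eps <= y -> Rabs (gK y) <= (M0 * a ^ 2 / (PI * eps)) / y ^ 2.
Proof.
  intros Hy. unfold gK. rewrite Rabs_mult.
  assert (H := Ka_bound eps y Hy). rewrite (Rabs_right (Ka a y)) by lra.
  assert (H0 := HM0 (x - y)). assert (Hp := M0_pos).
  replace (M0 * a ^ 2 / (PI * eps) / y ^ 2) with (M0 * (a ^ 2 / (PI * eps) / y ^ 2)) by (unfold Rdiv; ring).
  apply Rmult_le_compat; try lra. apply Rabs_pos.
Qed.

Lemma gKm_bound eps y : 0 < eps <= y -> Rabs (gK (0 - y)) <= (M0 * a ^ 2 / (PI * eps)) / y ^ 2.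
Proof.
  intros Hy. unfold gK. replace (0 - y) with (- y) by ring. rewrite Ka_odd, Rabs_mult, Rabs_Ropp.
  assert (H := Ka_bound eps y Hy). rewrite (Rabs_right (Ka a y)) by lra.
  assert (H0 := HM0 (x - - y)). assert (Hp := M0_pos).
  replace (M0 * a ^ 2 / (PI * eps) / y ^ 2) with (M0 * (a ^ 2 / (PI * eps) / y ^ 2)) by (unfold Rdiv; ring).
  apply Rmult_le_compat; try lra. apply Rabs_pos.
Qed.

Lemma Ipos_ex eps : 0 < eps -> exists I, filterlim (fun B => RInt gK eps B) (Rbar_locally p_infty) (locally I).
Proof.
  intros He. apply (impr_pinfty gK eps (M0 * a ^ 2 / (PI * eps))); auto.
  - intros y Hy. apply gK_cont. lra.
  - intros y Hy. apply gK_bound. lra.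
Qed.

Lemma Ineg_ex eps : 0 < eps -> exists I, filterlim (fun A => RInt gK A (- eps)) (Rbar_locally m_infty) (locally I).
Proof.
  intros He. destruct (impr_pinfty (fun y => gK (0 - y)) eps (M0 * a ^ 2 / (PI * eps))) as [I HI]; auto.
  - intros y Hy. apply cont_shift_m. apply gK_cont. lra.
  - intros y Hy. apply gKm_bound. lra.
  - exists I.
    assert (H : filterlim (fun A => RInt (fun y => gK (0 - y)) eps (- A)) (Rbar_locally m_infty) (locally I)).
    { apply (filterlim_comp _ _ _ (fun t => - t) (fun B => RInt (fun y => gK (0 - y)) eps B) _ (Rbar_locally p_infty)).
      apply lim_opp_minf. exact HI. }
    apply (filterlim_ext_loc (fun A => RInt (fun y => gK (0 - y)) eps (- A)) (fun A => RInt gK A (- eps))). 2: exact H.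
    exists (- eps). intros A HA.
    rewrite RInt_sub_minus.
    + f_equal; ring.
    + apply ex_RInt_cont. intros y Hy. apply gK_cont.
      rewrite Rmin_right, Rmax_left in Hy by lra. lra.
Qed.

Definition Ipos eps := real (Lim (fun B => RInt gK eps B) p_infty).
Definition Ineg eps := real (Lim (fun A => RInt gK A (- eps)) m_infty).

Lemma Ipos_lim eps : 0 < eps -> filterlim (fun B => RInt gK eps B) (Rbar_locally p_infty) (locally (Ipos eps)).
Proof.
  intros He. destruct (Ipos_ex eps He) as [I HI].
  assert (Hl : is_lim (fun B => RInt gK eps B) p_infty I) by exact HI.
  unfold Ipos. rewrite (is_lim_unique _ _ _ Hl). exact HI.
Qed.

Lemma Ineg_lim eps : 0 < eps -> filterlim (fun A => RInt gK A (- eps)) (Rbar_locally m_infty) (locally (Ineg eps)).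
Proof.
  intros He. destruct (Ineg_ex eps He) as [I HI].
  assert (Hl : is_lim (fun A => RInt gK A (- eps)) m_infty I) by exact HI.
  unfold Ineg. rewrite (is_lim_unique _ _ _ Hl). exact HI.
Qed.


Lemma seq_pinf (c d : R) : 0 < c -> filterlim (fun N : nat => c * INR N + d) eventually (Rbar_locally p_infty).
Proof.
  intros Hc. apply (filterlim_comp _ _ _ INR (fun t => c * t + d) _ (Rbar_locally p_infty)).
  exact is_lim_seq_INR. apply lim_pinf_lin; auto.
Qed.

Lemma seq_minf (c d : R) : 0 < c -> filterlim (fun N : nat => d - c * INR N) eventually (Rbar_locally m_infty).
Proof.
  intros Hc. apply (filterlim_comp _ _ _ INR (fun t => d - c * t) _ (Rbar_locally p_infty)).
  exact is_lim_seq_INR. apply lim_minf_lin; auto.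
Qed.

Lemma e_lim : is_lim_seq (fun N => - Pk a (2 * PI * INR N + PI)) 0.
Proof.
  assert (HPI := PI_pos).
  assert (Hw : is_lim_seq (fun N => 2 * PI * INR N + PI) p_infty) by (apply seq_pinf; lra).
  assert (Hi := is_lim_seq_inv _ _ Hw ltac:(discriminate)). simpl in Hi.
  assert (Hs := is_lim_seq_scal_l _ (a ^ 2 / (2 * PI * PI)) _ Hi).
  replace (Rbar_mult (a ^ 2 / (2 * PI * PI)) (Finite 0)) with (Finite 0) in Hs by (simpl; f_equal; ring).
  apply (is_lim_seq_le_le (fun _ => 0) _ _ 0 ) with (3 := Hs).
  2: apply is_lim_seq_const.
  intros N. assert (Hn := INR_ge0 N). set (w := 2 * PI * INR N + PI).
  assert (Hw0 : PI <= w) by (unfold w; nra).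
  split. generalize (Pk_le0 a w); lra.
  eapply Rle_trans. apply Pk_bound. lra.
  assert (0 <= a ^ 2) by apply pow2_ge_0.
  replace (a ^ 2 / (2 * PI * w ^ 2)) with (a ^ 2 / (2 * PI) * / w * / w) by (field; lra).
  replace (a ^ 2 / (2 * PI * PI) * / w) with (a ^ 2 / (2 * PI) * / w * / PI) by (field; lra).
  apply Rmult_le_compat_l. apply Rmult_le_pos. apply Rmult_le_pos; auto. apply Rlt_le, Rinv_0_lt_compat; lra.
  apply Rlt_le, Rinv_0_lt_compat; lra.
  apply Rinv_le_contravar; lra.
Qed.

Lemma S_bound eps : 0 < eps < x -> Ineg eps + Ipos eps <=
  RInt Gf 0 (x - eps) + RInt Gf (x + eps) (2 * x) + 2 * eps * M1 * (- Pk a x - Pk a (PI / 2)).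
Proof.
  intros He. assert (HPI := PI_pos).
  assert (Hu : is_lim_seq (fun N => RInt gK eps (2 * PI * (INR N + 1) + x) + RInt gK (x - 2 * PI * (INR N + 1)) (- eps))
                 (Ipos eps + Ineg eps)).
  { apply is_lim_seq_plus'.
    - apply (filterlim_comp _ _ _ (fun N => 2 * PI * (INR N + 1) + x) (fun B => RInt gK eps B) _ (Rbar_locally p_infty)).
      + apply (filterlim_ext (fun N => 2 * PI * INR N + (2 * PI + x))). intros; ring.
        apply seq_pinf; lra.
      + apply Ipos_lim; lra.
    - apply (filterlim_comp _ _ _ (fun N => x - 2 * PI * (INR N + 1)) (fun A => RInt gK A (- eps)) _ (Rbar_locally m_infty)).
      + apply (filterlim_ext (fun N => (x - 2 * PI) - 2 * PI * INR N)). intros; ring.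
        apply seq_minf; lra.
      + apply Ineg_lim; lra. }
  set (A0 := RInt Gf 0 (x - eps) + RInt Gf (x + eps) (2 * x)).
  set (D0 := 2 * eps * M1 * (- Pk a x - Pk a (PI / 2))).
  assert (Hv : is_lim_seq (fun N => A0 + 2 * x * M1 * (- Pk a (2 * PI * INR N + PI)) + D0) (A0 + D0)).
  { apply (is_lim_seq_ext (fun N => (A0 + D0) + 2 * x * M1 * (- Pk a (2 * PI * INR N + PI)))). intros; ring.
    assert (H : is_lim_seq (fun N => (A0 + D0) + 2 * x * M1 * (- Pk a (2 * PI * INR N + PI))) ((A0 + D0) + 2 * x * M1 * 0)).
    { apply is_lim_seq_plus'. apply is_lim_seq_const.
      apply (is_lim_seq_scal_l _ (2 * x * M1) 0). exact e_lim. }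
    replace ((A0 + D0) + 2 * x * M1 * 0) with (A0 + D0) in H by ring. exact H. }
  assert (Hle := is_lim_seq_le _ _ _ _ (fun N => finite_bound N eps He) Hu Hv). simpl in Hle. lra.
Qed.


Lemma gK_ex u v : 0 < u -> 0 < v -> ex_RInt gK u v.
Proof.
  intros Hu Hv. apply ex_RInt_cont. intros y Hy. apply gK_cont.
  assert (0 < Rmin u v) by (apply Rmin_glb_lt; auto). lra.
Qed.

Lemma gK_ex_neg u v : u < 0 -> v < 0 -> ex_RInt gK u v.
Proof.
  intros Hu Hv. apply ex_RInt_cont. intros y Hy. apply gK_cont.
  assert (Rmax u v < 0) by (apply Rmax_lub_lt; auto). lra.
Qed.

Lemma Ipos_shift eps eps' : 0 < eps -> 0 < eps' -> Ipos eps = RInt gK eps eps' + Ipos eps'.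
Proof.
  intros He He'.
  apply (filterlim_locally_unique (K := R_AbsRing) (V := R_NormedModule)
           (FF := Proper_StrongProper _ (Rbar_locally_filter p_infty)) (fun B => RInt gK eps B)).
  - apply Ipos_lim; auto.
  - apply (filterlim_ext_loc (fun B => RInt gK eps eps' + RInt gK eps' B)).
    + exists (Rmax eps eps'). intros B HB.
      assert (eps <= Rmax eps eps') by apply Rmax_l. assert (eps' <= Rmax eps eps') by apply Rmax_r.
      apply Chasles; apply gK_ex; lra.
    + apply lim_plus. apply filterlim_const. apply Ipos_lim; auto.
Qed.

Lemma Ineg_shift eps eps' : 0 < eps -> 0 < eps' -> Ineg eps = Ineg eps' + RInt gK (- eps') (- eps).
Proof.
  intros He He'.
  apply (filterlim_locally_unique (K := R_AbsRing) (V := R_NormedModule)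
           (FF := Proper_StrongProper _ (Rbar_locally_filter m_infty)) (fun A => RInt gK A (- eps))).
  - apply Ineg_lim; auto.
  - apply (filterlim_ext_loc (fun A => RInt gK A (- eps') + RInt gK (- eps') (- eps))).
    + exists (Rmin (- eps) (- eps')). intros A HA.
      assert (Rmin (- eps) (- eps') <= - eps) by apply Rmin_l. assert (Rmin (- eps) (- eps') <= - eps') by apply Rmin_r.
      apply Chasles; apply gK_ex_neg; lra.
    + apply lim_plus. apply Ineg_lim; auto. apply filterlim_const.
Qed.

Definition hs y := gK y + gK (0 - y).

Lemma hs_cont y : 0 < y -> continuous hs y.
Proof.
  intros Hy. unfold hs. apply cont_add. apply gK_cont; lra.
  apply cont_shift_m. apply gK_cont; lra.
Qed.

Lemma S_diff eps eps' : 0 < eps -> 0 < eps' ->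
  (Ineg eps + Ipos eps) - (Ineg eps' + Ipos eps') = RInt hs eps eps'.
Proof.
  intros He He'.
  rewrite (Ipos_shift eps eps'), (Ineg_shift eps eps') by auto.
  unfold hs. rewrite RInt_plusR.
  2: apply gK_ex; auto.
  2: { apply ex_RInt_cont. intros y Hy. apply cont_shift_m. apply gK_cont.
       assert (0 < Rmin eps eps') by (apply Rmin_glb_lt; auto). lra. }
  rewrite RInt_sub_minus. 2: apply gK_ex_neg; lra.
  replace (0 - eps') with (- eps') by ring. replace (0 - eps) with (- eps) by ring.
  fixR. ring.
Qed.

Lemma hs_bound y : 0 < y -> Rabs (hs y) <= 2 * M1 / PI.
Proof.
  intros Hy. assert (HPI := PI_pos). unfold hs, gK.
  replace (x - (0 - y)) with (x + y) by ring. replace (0 - y) with (- y) by ring.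
  rewrite Ka_odd.
  replace (f (x - y) * Ka a y + f (x + y) * - Ka a y) with ((f (x - y) - f (x + y)) * Ka a y) by ring.
  destruct (MVT_gen f (x - y) (x + y) F) as [c [Hc Heq]].
  - intros z _. apply Derive_correct, Hd1.
  - intros z _. apply continuity_pt_filterlim, fcont.
  - assert (Hd : Rabs (f (x - y) - f (x + y)) <= M1 * (2 * y)).
    { rewrite <- Rabs_Ropp. replace (- (f (x - y) - f (x + y))) with (f (x + y) - f (x - y)) by ring.
      rewrite Heq. rewrite Rabs_mult. replace (x + y - (x - y)) with (2 * y) by ring.
      rewrite (Rabs_right (2 * y)) by lra. apply Rmult_le_compat_r. lra. apply HM1. }
    assert (HK : 0 <= Ka a y <= / (PI * y)).
    { unfold Ka. assert (0 < a ^ 2) by (apply pow2_gt_0; lra).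
      assert (0 < y ^ 2) by (apply pow2_gt_0; lra).
      assert (0 < PI * y) by nra.
      assert (0 < PI * y * (y ^ 2 + a ^ 2)) by (apply Rmult_lt_0_compat; nra).
      split. apply Rlt_le, Rdiv_lt_0_compat; auto.
      replace (a ^ 2 / (PI * y * (y ^ 2 + a ^ 2))) with (/ (PI * y) * (a ^ 2 / (y ^ 2 + a ^ 2))) by (field; nra).
      rewrite <- (Rmult_1_r (/ (PI * y))) at 2. apply Rmult_le_compat_l.
      apply Rlt_le, Rinv_0_lt_compat; auto.
      apply Rmult_le_reg_r with (y ^ 2 + a ^ 2). nra. unfold Rdiv. rewrite Rmult_assoc, Rinv_l by nra. nra. }
    rewrite Rabs_mult. rewrite (Rabs_right (Ka a y)) by lra.
    assert (HM := M1_pos).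
    apply Rle_trans with (M1 * (2 * y) * / (PI * y)).
    apply Rmult_le_compat; try lra. apply Rabs_pos.
    right. field. lra.
Qed.

Lemma PV_ex : exists L, filterlim (fun eps => Ineg eps + Ipos eps) (at_right 0) (locally L).
Proof.
  assert (HPI := PI_pos). assert (HM := M1_pos).
  apply (cauchy_lim _ (fun e => 2 * M1 / PI * e) 0 (fun e => 0 < e)).
  - unfold at_right, within. apply filter_forall. auto.
  - intros u v Hu Hv.
    replace (Ineg v + Ipos v - (Ineg u + Ipos u)) with (- ((Ineg u + Ipos u) - (Ineg v + Ipos v))) by ring.
    rewrite Rabs_Ropp, S_diff by auto.
    apply (RInt_bound_prim_sym hs (fun _ => 2 * M1 / PI) (fun e => 2 * M1 / PI * e) (fun e => 0 < e)); auto.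
    + intros; lra.
    + apply hs_cont.
    + apply hs_bound.
    + intros y _. auto_derive; auto. ring.
    + intros; apply continuous_const.
  - apply (filterlim_filter_le_1 (F := locally 0)). apply filter_le_within.
    assert (H : continuous (fun e => 2 * M1 / PI * e) 0).
    { apply cont_mul. apply continuous_const. apply continuous_id. }
    unfold continuous in H. rewrite Rmult_0_r in H. exact H.
Qed.


Definition K0 := - Pk a x - 2 * Pk a (2 * PI - x).

Lemma I1_ex : exists I1, filterlim (fun c => RInt Gf 0 c) (at_left x) (locally I1).
Proof.
  assert (HPI := PI_pos). assert (HM := M1_pos).
  apply (impr_left Gf 0 x (M1 * K0) (M1 * (2 / PI * sqrt a))). lra.
  - intros y Hy. unfold Gf. apply cont_mul. apply Fcont. apply Gq_cont. lra.
    apply Rabs_def1; lra.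
  - intros y Hy. unfold Gf. rewrite Rabs_mult.
    assert (H1 := Gq_bound_left a x y Ha Hx Hy).
    replace (M1 * K0 + M1 * (2 / PI * sqrt a) / sqrt (x - y)) with
      (M1 * (- Pk a x - 2 * Pk a (2 * PI - x) + 2 / PI * sqrt a / sqrt (x - y))) by (unfold K0, Rdiv; ring).
    apply Rmult_le_compat; auto; try apply Rabs_pos.
Qed.

Lemma I2_ex : exists I2, filterlim (fun c => RInt Gf c (2 * x)) (at_right x) (locally I2).
Proof.
  assert (HPI := PI_pos). assert (HM := M1_pos).
  apply (impr_right Gf x (2 * x) (M1 * K0) (M1 * (2 / PI * sqrt a))). lra.
  - intros y Hy. unfold Gf. apply cont_mul. apply Fcont. apply Gq_cont. lra.
    apply Rabs_def1; lra.
  - intros y Hy. unfold Gf. rewrite Rabs_mult.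
    assert (H1 := Gq_bound_right a x y Ha Hx Hy).
    replace (M1 * K0 + M1 * (2 / PI * sqrt a) / sqrt (y - x)) with
      (M1 * (- Pk a x - 2 * Pk a (2 * PI - x) + 2 / PI * sqrt a / sqrt (y - x))) by (unfold K0, Rdiv; ring).
    apply Rmult_le_compat; auto; try apply Rabs_pos.
Qed.

Lemma at_left_ev (P : R -> Prop) : (forall b, 0 < b < x -> P b) -> at_left x P.
Proof.
  intros H. destruct Hx as [Hx0 _]. exists (mkposreal x Hx0). intros y Hy Hyx.
  apply ball_R in Hy. simpl in Hy. apply Rabs_def2 in Hy. destruct Hy as [H1 H2].
  unfold minus, plus, opp in H1, H2; simpl in H1, H2. apply H. lra.
Qed.

Lemma at_right_ev (P : R -> Prop) : (forall b, x < b < 2 * x -> P b) -> at_right x P.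
Proof.
  intros H. destruct Hx as [Hx0 _]. exists (mkposreal x Hx0). intros y Hy Hyx.
  apply ball_R in Hy. simpl in Hy. apply Rabs_def2 in Hy. destruct Hy as [H1 H2].
  unfold minus, plus, opp in H1, H2; simpl in H1, H2. apply H. lra.
Qed.

Lemma Gf_Ga u v : 0 <= u -> u <= v -> v <= 2 * x -> (v <= x \/ x <= u) ->
  forall y, Rmin u v < y < Rmax u v -> Gf y = F y * Ga a x y.
Proof.
  intros H1 H2 H3 H4 y Hy. rewrite Rmin_left, Rmax_right in Hy by lra.
  unfold Gf. rewrite Gq_Ga; auto. lra. lra.
Qed.

Lemma final_sec : exists L I1 I2 : R,
    is_Ha a f x L /\
    is_RInt_gen (fun y => Derive f y * Ga a x y) (at_point 0) (at_left x) I1 /\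
    is_RInt_gen (fun y => Derive f y * Ga a x y) (at_right x) (at_point (2 * x)) I2 /\
    L <= I1 + I2.
Proof.
  assert (HPI := PI_pos). assert (HM := M1_pos).
  destruct PV_ex as [L HL]. destruct I1_ex as [I1 H1]. destruct I2_ex as [I2 H2].
  exists L, I1, I2. split; [|split; [|split]].
  - exists Ineg, Ipos. split; auto.
    intros eps He. split.
    + apply (RInt_gen_point_r gK (- eps) (Rbar_locally m_infty) (Ineg eps)).
      * exists (- eps). intros A HA. apply gK_ex_neg; lra.
      * apply Ineg_lim; auto.
    + apply (RInt_gen_point_l gK eps (Rbar_locally p_infty) (Ipos eps)).
      * exists eps. intros B HB. apply gK_ex; lra.
      * apply Ipos_lim; auto.
  - apply (RInt_gen_point_l _ 0 (at_left x) I1).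
    + apply at_left_ev. intros b Hb. apply (ex_RInt_ext Gf).
      apply Gf_Ga; lra. apply ex_RInt_Gf; lra.
    + apply (filterlim_ext_loc (fun c => RInt Gf 0 c)); auto.
      apply at_left_ev. intros b Hb. apply RInt_ext. apply Gf_Ga; lra.
  - apply (RInt_gen_point_r _ (2 * x) (at_right x) I2).
    + apply at_right_ev. intros b Hb. apply (ex_RInt_ext Gf).
      apply Gf_Ga; lra. apply ex_RInt_Gf; lra.
    + apply (filterlim_ext_loc (fun c => RInt Gf c (2 * x))); auto.
      apply at_right_ev. intros b Hb. apply RInt_ext. apply Gf_Ga; lra.
  - set (C := - Pk a x - Pk a (PI / 2)).
    assert (HR : filterlim (fun e => RInt Gf 0 (x - e) + RInt Gf (x + e) (2 * x) + 2 * e * M1 * C)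
                   (at_right 0) (locally (I1 + I2 + 0))).
    { apply lim_plus. apply lim_plus.
      - apply (filterlim_comp _ _ _ (fun e => x - e) (fun c => RInt Gf 0 c) _ (at_left x)); auto.
        intros P [d HP]. exists d. intros e He He0. apply HP.
        apply ball_R. apply ball_R in He. unfold minus, plus, opp in He; simpl in He.
        replace (x - e - x) with (- (e + - 0)) by ring. rewrite Rabs_Ropp. exact He. lra.
      - apply (filterlim_comp _ _ _ (fun e => x + e) (fun c => RInt Gf c (2 * x)) _ (at_right x)); auto.
        intros P [d HP]. exists d. intros e He He0. apply HP.
        apply ball_R. apply ball_R in He. unfold minus, plus, opp in He; simpl in He.
        replace (x + e - x) with (e + - 0) by ring. exact He. lra.
      - apply (filterlim_filter_le_1 (F := locally 0)). apply filter_le_within.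
        assert (H : continuous (fun e => 2 * e * M1 * C) 0).
        { apply ex_derive_cont. auto_derive. auto. }
        unfold continuous in H. replace (2 * 0 * M1 * C) with 0 in H by ring. exact H. }
    assert (Hle := filterlim_le (F := at_right 0) (FF := Proper_StrongProper _ (at_right_proper_filter 0))
                     (fun e => Ineg e + Ipos e) (fun e => RInt Gf 0 (x - e) + RInt Gf (x + e) (2 * x) + 2 * e * M1 * C) L (I1 + I2 + 0)).
    simpl in Hle. apply Rle_trans with (I1 + I2 + 0); [|lra].
    apply Hle; auto.
    destruct Hx as [Hx0 _]. exists (mkposreal x Hx0). intros e He He0.
    apply ball_R in He. simpl in He. apply Rabs_def2 in He. destruct He as [Ha1 Ha2].
    unfold minus, plus, opp in Ha1, Ha2; simpl in Ha1, Ha2.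
    apply S_bound. lra.
Qed.

End Main.


Theorem lemma4p5 (a : R) (f : R -> R) :
  0 < a ->
  smooth_periodic f ->
  (forall x, f (- x) = f x) ->
  (forall x, 0 <= f x) ->
  f 0 = 0 ->
  (forall y, 0 <= y < PI -> 0 <= Derive f y) ->
  forall x, 0 < x <= PI / 2 ->
  exists L I1 I2 : R,
    is_Ha a f x L /\
    is_RInt_gen (fun y => Derive f y * Ga a x y) (at_point 0) (at_left x) I1 /\
    is_RInt_gen (fun y => Derive f y * Ga a x y) (at_right x) (at_point (2 * x)) I2 /\
    L <= I1 + I2.
Proof.
  intros Ha [Hper [Hdn Hbd]] Hev Hnn Hf0 Hmono x Hx.
  destruct (Hbd 0%nat) as [M0 HM0]. destruct (Hbd 1%nat) as [M1 HM1].
  apply (final_sec a f x M0 M1); auto.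
  - intros y. exact (Hdn 1%nat y).
  - intros y. exact (Hdn 2%nat y).
Qed.
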